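(* Let $y_0\in\mathbb{R}$, $b>0$, $\epsilon>0$, and let $f:[y_0,\infty)\to\mathbb{R}$ be such that $p:=1/f$ is well defined and twice differentiable on $[y_0,\infty)$, with $f(y_0)>0$, $f'(y)>0$ and $p''(y)>0$ for all $y\ge y_0$. Assume $b<\int_{y_0}^{\infty}p(y)\,dy$ (possibly $+\infty$). For $h>0$ and integers $N\ge0$ define $$\Sigma_{l,h,N}=\sum_{i=1}^{N}h\,p(y_0+hi),\qquad \Sigma_{t,h,N}=\sum_{i=1}^{N}\frac h2\big(p(y_0+hi)+p(y_0+h(i-1))\big).$$ For each positive integer $j$ let $h^{(j)}=\epsilon/j$, let $n_2^{(j)}$ be the smallest positive integer $N$ with $\Sigma_{l,h^{(j)},N}\ge b$ (assume $n_2^{(1)}$ exists), and let $n_3^{(j)}$ be the largest integer $N\ge0$ with $\Sigma_{t,h^{(j)},N}\le b$. Assume $n_3^{(1)}\ge1$. If $j$ is a positive integer such that $\Sigma_{t,h^{(j)},\,n_2^{(j)}-j}\le b$ (i.e. Algorithm 1, which for $j=1,2,\dots$ stops at the first $j$ with this inequality, can stop at iteration $j$), then $$j>1+\frac12\cdot\frac{p(y_0)-p\big(y_0+h^{(1)}n_3^{(1)}-h^{(1)}\big)-2\,p\big(y_0+h^{(1)}n_3^{(1)}\big)}{2\,p\big(y_0+h^{(1)}n_3^{(1)}-h^{(1)}\big)}.$$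
   Context: $\Sigma_{l,h,N}$ and $\Sigma_{t,h,N}$ are the lower rectangular and trapezoidal sums with step $h$ for $\int_{y_0}^{y_0+hN}p(y)\,dy$; empty sums are $0$. Here $h^{(1)}=\epsilon$. *)

(* Defs.v *)
From Stdlib Require Import Reals Lra.
From Coquelicot Require Import Coquelicot.
Open Scope R_scope.

Definition is_derive_halfline (g : R -> R) (y0 y l : R) : Prop :=
  filterlim (fun x => (g x - g y) / (x - y))
    (within (fun x => y0 <= x /\ x <> y) (locally y)) (locally l).

Fixpoint sigma_l (p : R -> R) (y0 h : R) (N : nat) : R :=
  match N with
  | O => 0
  | S n => sigma_l p y0 h n + h * p (y0 + h * INR (S n))
  end.

Fixpoint sigma_t (p : R -> R) (y0 h : R) (N : nat) : R :=
  match N with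
  | O => 0
  | S n => sigma_t p y0 h n
           + h / 2 * (p (y0 + h * INR (S n)) + p (y0 + h * INR n))
  end.

Definition is_n2 (p : R -> R) (y0 eps b : R) (j n : nat) : Prop :=
  (1 <= n)%nat /\ b <= sigma_l p y0 (eps / INR j) n /\
  (forall m : nat, (1 <= m)%nat -> (m < n)%nat -> sigma_l p y0 (eps / INR j) m < b).

Definition is_n3 (p : R -> R) (y0 eps b : R) (j n : nat) : Prop :=
  sigma_t p y0 (eps / INR j) n <= b /\
  (forall m : nat, (n < m)%nat -> b < sigma_t p y0 (eps / INR j) m).

(* Main.v *)
Require Import Defs.
From Stdlib Require Import Reals Lra Lia.
From Coquelicot Require Import Coquelicot.
Open Scope R_scope.

Lemma half_eps g y0 y l : is_derive_halfline g y0 y l ->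
  forall e, 0 < e -> exists d, 0 < d /\ forall x, Rabs (x - y) < d -> y0 <= x -> x <> y ->
   Rabs ((g x - g y) / (x - y) - l) < e.
Proof.
  intros H e He.
  assert (Hl : locally l (fun z => Rabs (z - l) < e)).
  { exists (mkposreal e He); intros z Hz; exact Hz. }
  specialize (H _ Hl). destruct H as [d Hd].
  exists d; split; [apply cond_pos|]. intros x Hx H1 H2.
  exact (Hd x Hx (conj H1 H2)).
Qed.

Lemma half_cont g y0 y l : y0 <= y -> is_derive_halfline g y0 y l ->
  continuity_pt (fun x => g (Rmax y0 x)) y.
Proof.
  intros Hy H e He.
  destruct (half_eps _ _ _ _ H 1 Rlt_0_1) as [d [Hd Hx]].
  exists (Rmin d (e / (Rabs l + 1))). split.
  { apply Rmin_pos; auto. apply Rdiv_lt_0_compat; auto. pose proof (Rabs_pos l); lra. }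
  intros x [_ Hxd]. simpl in *. unfold R_dist in *.
  rewrite (Rmax_right y0 y Hy).
  set (x' := Rmax y0 x).
  assert (Hx' : Rabs (x' - y) <= Rabs (x - y)).
  { unfold x'. unfold Rmax. destruct (Rle_dec y0 x); [lra|].
    rewrite !Rabs_left1; lra. }
  assert (Hy0 : y0 <= x') by (unfold x'; apply Rmax_l).
  destruct (Req_dec x' y) as [E|E].
  { rewrite E. replace (g y - g y) with 0 by ring. rewrite Rabs_R0; lra. }
  assert (Hm : Rabs (x' - y) < Rmin d (e / (Rabs l + 1))) by lra.
  pose proof (Rmin_l d (e / (Rabs l + 1))). pose proof (Rmin_r d (e / (Rabs l + 1))).
  specialize (Hx x' ltac:(lra) Hy0 E).
  assert (Hne : x' - y <> 0) by lra.
  replace (g x' - g y) with (((g x' - g y) / (x' - y) - l + l) * (x' - y)) by (field; auto).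
  rewrite Rabs_mult.
  assert (Rabs ((g x' - g y) / (x' - y) - l + l) <= Rabs l + 1).
  { eapply Rle_trans; [apply Rabs_triang|]. lra. }
  assert (Hp : 0 < Rabs l + 1) by (pose proof (Rabs_pos l); lra).
  assert (Rabs (x' - y) < e / (Rabs l + 1)) by lra.
  apply Rle_lt_trans with ((Rabs l + 1) * Rabs (x' - y)).
  { apply Rmult_le_compat_r; auto. apply Rabs_pos. }
  apply Rlt_le_trans with ((Rabs l + 1) * (e / (Rabs l + 1))).
  { apply Rmult_lt_compat_l; auto. }
  right; field; lra.
Qed.

Lemma half_int g y0 y l : y0 < y -> is_derive_halfline g y0 y l ->
  is_derive (fun x => g (Rmax y0 x)) y l.
Proof.
  intros Hy H. apply is_derive_Reals. intros e He.
  destruct (half_eps _ _ _ _ H e He) as [d [Hd Hx]].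
  assert (Hp : 0 < Rmin d (y - y0)) by (apply Rmin_pos; lra).
  exists (mkposreal _ Hp). intros h Hh Hhd. simpl in Hhd.
  pose proof (Rmin_l d (y - y0)). pose proof (Rmin_r d (y - y0)).
  assert (- Rabs h <= h <= Rabs h) by (split; [rewrite <- Rabs_Ropp; pose proof (Rle_abs (-h)); lra| apply Rle_abs]).
  rewrite (Rmax_right y0 (y+h)) by lra. rewrite (Rmax_right y0 y) by lra.
  specialize (Hx (y + h)). replace (y + h - y) with h in Hx by ring.
  apply Hx; lra.
Qed.

Lemma mvt_half g d y0 a b : (forall y, y0 <= y -> is_derive_halfline g y0 y (d y)) ->
  y0 <= a -> a < b -> exists c, a <= c <= b /\ g b - g a = d c * (b - a).
Proof.
  intros H Ha Hab.
  destruct (MVT_gen (fun x => g (Rmax y0 x)) a b d) as [c [Hc E]].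
  - intros x Hx. rewrite Rmin_left, Rmax_right in Hx by lra.
    apply half_int; [lra|]. apply H; lra.
  - intros x Hx. rewrite Rmin_left, Rmax_right in Hx by lra.
    eapply half_cont; [|apply H]; lra.
  - rewrite Rmin_left, Rmax_right in Hc by lra. exists c; split; auto.
    rewrite (Rmax_right y0 a), (Rmax_right y0 b) in E by lra. exact E.
Qed.
Section Disc1.
Variables (p : R -> R) (y0 : R).
Hypothesis Ppos : forall y, y0 <= y -> 0 < p y.
Hypothesis Pdec : forall x z, y0 <= x -> x < z -> p z < p x.
Hypothesis Pcvx : forall x w t, y0 <= x -> x < w -> 0 <= t <= 1 ->
  p (x + t * (w - x)) <= (1 - t) * p x + t * p w.

Lemma Pdec' x z : y0 <= x -> x <= z -> p z <= p x.
Proof. intros. destruct (Req_dec x z). subst; lra. left; apply Pdec; lra. Qed.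

Lemma D1 h N : sigma_t p y0 h N = sigma_l p y0 h N + h / 2 * (p y0 - p (y0 + h * INR N)).
Proof.
  induction N as [|n IH]; cbn [sigma_t sigma_l].
  - simpl INR. rewrite Rmult_0_r, Rplus_0_r. unfold Rminus; rewrite Rplus_opp_r, Rmult_0_r, Rplus_0_r. reflexivity.
  - rewrite IH. lra.
Qed.

Lemma D2 h M k : 0 < h ->
  sigma_t p y0 h (M + k) - sigma_t p y0 h M <=
  h / 2 * p (y0 + h * INR (M + k)) + h * (INR k - / 2) * p (y0 + h * INR M).
Proof.
  intros Hh. induction k as [|k IH].
  - rewrite Nat.add_0_r. simpl INR. lra.
  - rewrite Nat.add_succ_r. cbn [sigma_t].
    assert (p (y0 + h * INR (M + k)) <= p (y0 + h * INR M)).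
    { apply Pdec'. pose proof (pos_INR M). nra. apply Rplus_le_compat_l.
      apply Rmult_le_compat_l; [lra|]. apply le_INR; lia. }
    assert (h * p (y0 + h * INR (M + k)) <= h * p (y0 + h * INR M)) by (apply Rmult_le_compat_l; lra).
    rewrite (S_INR k). lra.
Qed.

Lemma sigma_l_mono h N M : 0 < h -> (N <= M)%nat -> sigma_l p y0 h N <= sigma_l p y0 h M.
Proof.
  intros Hh H. induction H. lra. cbn [sigma_l]. eapply Rle_trans; [apply IHle|].
  assert (0 < p (y0 + h * INR (S m))).
  { apply Ppos. pose proof (pos_INR (S m)). nra. }
  nra.
Qed.
End Disc1.
Section Disc2.
Variables (p : R -> R) (y0 : R).
Hypothesis Ppos : forall y, y0 <= y -> 0 < p y.
Hypothesis Pdec : forall x z, y0 <= x -> x < z -> p z < p x.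
Hypothesis Pcvx : forall x w t, y0 <= x -> x < w -> 0 <= t <= 1 ->
  p (x + t * (w - x)) <= (1 - t) * p x + t * p w.

Lemma Block eps j m k : 0 < eps -> (1 <= j)%nat -> (k <= j)%nat ->
  let h := eps / INR j in let x := y0 + eps * INR m in
  sigma_l p y0 h (j * m + k) - sigma_l p y0 h (j * m) <=
  h * (INR k * p x - INR k * (INR k + 1) / (2 * INR j) * (p x - p (x + eps))).
Proof.
  intros He Hj Hk h x.
  assert (HJ : 1 <= INR j) by (apply (le_INR 1); auto).
  assert (Hh : 0 < h) by (unfold h; apply Rdiv_lt_0_compat; lra).
  assert (Hx : y0 <= x) by (unfold x; pose proof (pos_INR m); nra).
  induction k as [|k IH].
  - rewrite Nat.add_0_r. simpl INR. lra.
  - rewrite Nat.add_succ_r. cbn [sigma_l].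
    specialize (IH ltac:(lia)).
    set (t := INR (S k) / INR j).
    assert (Ht : 0 <= t <= 1).
    { unfold t. split. apply Rdiv_le_0_compat; [apply pos_INR|lra].
      assert (INR (S k) <= INR j) by (apply le_INR; auto).
      replace 1 with (INR j / INR j) by (field; lra). unfold Rdiv.
      apply Rmult_le_compat_r; [left; apply Rinv_0_lt_compat; lra | auto]. }
    assert (E : y0 + h * INR (S (j * m + k)) = x + t * ((x + eps) - x)).
    { unfold h, x, t. rewrite <- Nat.add_succ_r, plus_INR, mult_INR. field. lra. }
    rewrite E.
    pose proof (Pcvx x (x + eps) t Hx ltac:(lra) Ht) as C.
    assert (C' : h * p (x + t * (x + eps - x)) <= h * ((1 - t) * p x + t * p (x + eps)))
      by (apply Rmult_le_compat_l; lra).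
    assert (Eq : h * (INR (S k) * p x - INR (S k) * (INR (S k) + 1) / (2 * INR j) * (p x - p (x + eps)))
       = h * (INR k * p x - INR k * (INR k + 1) / (2 * INR j) * (p x - p (x + eps)))
         + h * ((1 - t) * p x + t * p (x + eps))).
    { unfold t. rewrite S_INR. field. lra. }
    rewrite Eq. lra.
Qed.

Lemma BlockS eps j m : 0 < eps -> (1 <= j)%nat ->
  sigma_l p y0 (eps / INR j) (j * S m) - sigma_l p y0 (eps / INR j) (j * m) <
  eps / 2 * (p (y0 + eps * INR (S m)) + p (y0 + eps * INR m)).
Proof.
  intros He Hj.
  assert (HJ : 1 <= INR j) by (apply (le_INR 1); auto).
  pose proof (Block eps j m j He Hj (le_n _)) as B. simpl in B.
  rewrite Nat.mul_succ_r.
  set (x := y0 + eps * INR m) in *.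
  assert (Hx : y0 <= x) by (unfold x; pose proof (pos_INR m); nra).
  assert (Ex : y0 + eps * INR (S m) = x + eps) by (unfold x; rewrite S_INR; ring).
  rewrite Ex.
  assert (D : p (x + eps) < p x) by (apply Pdec; lra).
  eapply Rle_lt_trans; [exact B|].
  assert (Eq : eps / INR j * (INR j * p x - INR j * (INR j + 1) / (2 * INR j) * (p x - p (x + eps)))
     = eps / 2 * (p (x + eps) + p x) - eps / (2 * INR j) * (p x - p (x + eps))).
  { field. lra. }
  rewrite Eq.
  assert (0 < eps / (2 * INR j) * (p x - p (x + eps))).
  { apply Rmult_lt_0_compat; [apply Rdiv_lt_0_compat; lra|lra]. }
  lra.
Qed.

Lemma Blocks eps j n : 0 < eps -> (1 <= j)%nat ->
  sigma_l p y0 (eps / INR j) (j * n) <= sigma_t p y0 eps n.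
Proof.
  intros He Hj. induction n as [|n IH].
  - rewrite Nat.mul_0_r. simpl. lra.
  - pose proof (BlockS eps j n He Hj). cbn [sigma_t]. lra.
Qed.

Lemma BlocksS eps j n : 0 < eps -> (1 <= j)%nat ->
  sigma_l p y0 (eps / INR j) (j * S n) < sigma_t p y0 eps (S n).
Proof.
  intros He Hj. pose proof (BlockS eps j n He Hj). pose proof (Blocks eps j n He Hj).
  cbn [sigma_t]. lra.
Qed.
End Disc2.

Theorem theorem2 (y0 b eps : R) (f : R -> R) :
  0 < b -> 0 < eps ->
  (forall y, y0 <= y -> f y <> 0) ->
  0 < f y0 ->
  (exists f' : R -> R,
      (forall y, y0 <= y -> is_derive_halfline f y0 y (f' y)) /\
      (forall y, y0 <= y -> 0 < f' y)) ->
  (exists p1 p2 : R -> R,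
      (forall y, y0 <= y -> is_derive_halfline (fun x => / f x) y0 y (p1 y)) /\
      (forall y, y0 <= y -> is_derive_halfline p1 y0 y (p2 y)) /\
      (forall y, y0 <= y -> 0 < p2 y)) ->
  (exists I : Rbar,
      is_lim (fun X => RInt (fun x => / f x) y0 X) p_infty I /\ Rbar_lt b I) ->
  (exists n, is_n2 (fun x => / f x) y0 eps b 1 n) ->
  forall n3 : nat, is_n3 (fun x => / f x) y0 eps b 1 n3 -> (1 <= n3)%nat ->
  forall j n2j : nat, (1 <= j)%nat ->
  is_n2 (fun x => / f x) y0 eps b j n2j ->
  sigma_t (fun x => / f x) y0 (eps / INR j) (n2j - j) <= b ->
  INR j > 1 + / 2 *
    ((/ f y0 - / f (y0 + eps * INR n3 - eps) - 2 * / f (y0 + eps * INR n3))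
     / (2 * / f (y0 + eps * INR n3 - eps))).
Proof.
  intros Hb He Hf0 Hfy0 [f' [Hfd Hfp]] [p1 [p2 [Hp1 [Hp2 Hp2pos]]]] _ _ n3 [Hn3a Hn3b] Hn3
    j n2j Hj [Hn2a [Hn2b Hn2c]] Hstop.
  assert (finc : forall a c, y0 <= a -> a < c -> f a < f c).
  { intros a c Ha Hac. destruct (mvt_half f f' y0 a c Hfd Ha Hac) as [d [Hd E]].
    assert (0 < f' d) by (apply Hfp; lra).
    assert (0 < f' d * (c - a)) by (apply Rmult_lt_0_compat; lra). lra. }
  assert (fpos : forall y, y0 <= y -> 0 < f y).
  { intros y Hy. destruct (Req_dec y0 y) as [<-|]; auto.
    apply Rlt_trans with (f y0); auto. apply finc; lra. }
  assert (Ppos : forall y, y0 <= y -> 0 < (fun x => / f x) y).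
  { intros y Hy. cbv beta. apply Rinv_0_lt_compat; auto. }
  assert (Pdec : forall x z, y0 <= x -> x < z -> (fun x => / f x) z < (fun x => / f x) x).
  { intros x z Hx Hxz. cbv beta. apply Rinv_lt_contravar.
    apply Rmult_lt_0_compat; apply fpos; lra. apply finc; lra. }
  assert (p1mono : forall a c, y0 <= a -> a <= c -> p1 a <= p1 c).
  { intros a c Ha Hac. destruct (Req_dec a c) as [<-|]; [lra|].
    destruct (mvt_half p1 p2 y0 a c Hp2 Ha ltac:(lra)) as [d [Hd E]].
    assert (0 < p2 d) by (apply Hp2pos; lra).
    assert (0 < p2 d * (c - a)) by (apply Rmult_lt_0_compat; lra). lra. }
  assert (Pcvx : forall x w t, y0 <= x -> x < w -> 0 <= t <= 1 ->
    (fun x => / f x) (x + t * (w - x)) <= (1 - t) * (fun x => / f x) x + t * (fun x => / f x) w).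
  { intros x w t Hx Hxw Ht. cbv beta.
    destruct (Req_dec t 0) as [->|Ht0].
    { replace (x + 0 * (w - x)) with x by ring. lra. }
    destruct (Req_dec t 1) as [->|Ht1].
    { replace (x + 1 * (w - x)) with w by ring. lra. }
    set (z := x + t * (w - x)).
    assert (0 < t * (w - x)) by (apply Rmult_lt_0_compat; lra).
    assert (0 < (1 - t) * (w - x)) by (apply Rmult_lt_0_compat; lra).
    assert (Hxz : x < z) by (unfold z; lra).
    assert (Hzw : z < w) by (unfold z; lra).
    destruct (mvt_half (fun x => / f x) p1 y0 x z Hp1 Hx Hxz) as [c1 [Hc1 E1]].
    destruct (mvt_half (fun x => / f x) p1 y0 z w Hp1 ltac:(lra) Hzw) as [c2 [Hc2 E2]].
    cbv beta in E1, E2.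
    assert (Hm : p1 c1 <= p1 c2) by (apply p1mono; lra).
    replace (z - x) with (t * (w - x)) in E1 by (unfold z; ring).
    replace (w - z) with ((1 - t) * (w - x)) in E2 by (unfold z; ring).
    assert (K : p1 c1 * (t * ((1 - t) * (w - x))) <= p1 c2 * (t * ((1 - t) * (w - x)))).
    { apply Rmult_le_compat_r; [|auto]. apply Rmult_le_pos; lra. }
    assert (K1 : (1 - t) * (/ f z - / f x) = p1 c1 * (t * ((1 - t) * (w - x))))
      by (rewrite E1; ring).
    assert (K2 : t * (/ f w - / f z) = p1 c2 * (t * ((1 - t) * (w - x))))
      by (rewrite E2; ring).
    lra. }
  set (h := eps / INR j) in *.
  assert (HJ : 1 <= INR j) by (apply (le_INR 1); auto).
  assert (Hh : 0 < h) by (unfold h; apply Rdiv_lt_0_compat; lra).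
  replace (eps / INR 1) with eps in Hn3a by (simpl; field).
  destruct n3 as [|n3']; [lia|].
  pose proof (BlocksS (fun x => / f x) y0 Pdec Pcvx eps j n3' He Hj) as BS.
  fold h in BS.
  assert (HN : (j * S n3' < n2j)%nat).
  { destruct (Nat.lt_ge_cases (j * S n3') n2j) as [|Hle]; auto.
    pose proof (sigma_l_mono (fun x => / f x) y0 Ppos h _ _ Hh Hle). lra. }
  set (M := (n2j - j)%nat) in *.
  assert (EN : n2j = (M + j)%nat) by (unfold M; nia).
  pose proof (D1 (fun x => / f x) y0 h n2j) as d1.
  pose proof (D2 (fun x => / f x) y0 Pdec h M j Hh) as d2.
  rewrite <- EN in d2. cbv beta in d1, d2.
  set (E := y0 + h * INR n2j) in *.
  set (Em := y0 + h * INR M) in *.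
  assert (Key : h * (/ f y0 - 2 * / f E - (2 * INR j - 1) * / f Em) <= 0) by lra.
  assert (Key' : / f y0 <= 2 * / f E + (2 * INR j - 1) * / f Em).
  { assert (/ f y0 - 2 * / f E - (2 * INR j - 1) * / f Em <= 0); [|lra].
    destruct (Rle_lt_dec (/ f y0 - 2 * / f E - (2 * INR j - 1) * / f Em) 0); auto.
    assert (0 < h * (/ f y0 - 2 * / f E - (2 * INR j - 1) * / f Em)) by (apply Rmult_lt_0_compat; lra).
    lra. }
  set (a := y0 + eps * INR (S n3')).
  assert (HNlt : INR j * INR (S n3') < INR n2j).
  { rewrite <- mult_INR. apply lt_INR; auto. }
  assert (HEa : a < E).
  { unfold a, E, h. apply Rplus_lt_compat_l.
    apply Rmult_lt_reg_l with (INR j); [lra|].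
    replace (INR j * (eps / INR j * INR n2j)) with (eps * INR n2j) by (field; lra).
    replace (INR j * (eps * INR (S n3'))) with (eps * (INR j * INR (S n3'))) by ring.
    apply Rmult_lt_compat_l; lra. }
  assert (HEm : Em = E - eps).
  { unfold Em, E, h. rewrite EN, plus_INR. field. lra. }
  assert (Ha1 : a - eps = y0 + eps * INR n3') by (unfold a; rewrite S_INR; ring).
  assert (Hy0a : y0 <= a - eps) by (rewrite Ha1; pose proof (pos_INR n3'); nra).
  assert (q1 : / f E < / f a) by (apply (Pdec a E); lra).
  assert (q2 : / f Em < / f (a - eps)) by (apply (Pdec (a - eps) Em); lra).
  assert (q0 : 0 < / f (a - eps)) by (apply (Ppos (a - eps)); lra).
  assert (q3 : (2 * INR j - 1) * / f Em <= (2 * INR j - 1) * / f (a - eps))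
    by (apply Rmult_le_compat_l; lra).
  assert (q4 : 0 <= (2 * INR j - 2) * / f (a - eps)) by (apply Rmult_le_pos; lra).
  fold a. unfold Rminus at 2 3.
  replace (a + - eps) with (a - eps) by ring.
  set (q := / f (a - eps)) in *. set (r := / f a) in *.
  assert (X : (/ f y0 - q - 2 * r) / (2 * q) < 2 * (INR j - 1)).
  { apply (Rmult_lt_reg_r (2 * q)); [lra|].
    replace ((/ f y0 - q - 2 * r) / (2 * q) * (2 * q)) with (/ f y0 - q - 2 * r) by (field; lra).
    lra. }
  lra.
Qed.
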